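(* Let $G$ be a non-supergraceful graph with $p$ nodes and $q$ edges having a node $u$ of degree $p-1$. Suppose there is a semitotal labeling $\varphi$ of $G$ such that $\varphi(u) = \mathrm{opt}(G)$ and $\mathrm{opt}(G)-1 \in N(\varphi) \cup E(\varphi)$, where $\mathrm{opt}(G) = p+q+q_0$. Then there is a semitotal labeling $\mu$ of $G$ such that $1 \in N(\mu)$.
   Context: Graphs are finite, simple, connected. For a labeling $\varphi: V(G) \to \mathbb{Z}_{>0}$ let $N(\varphi) = \{\varphi(x) : x \in V(G)\}$ and $E(\varphi) = \{|\varphi(x)-\varphi(y)| : xy \in E(G)\}$. A total labeling of a $(p,q)$-graph $G$ is a map $\varphi$ such that the $p$ node labels and the $q$ edge labels are pairwise distinct and $N(\varphi) \cup E(\varphi) = \{1,\dots,p+q\}$; $G$ is supergraceful if it has one, non-supergraceful otherwise. If $G$ is non-supergraceful, let $q_0 > 0$ be the least integer such that there is a labeling $\varphi$ with all $p$ node labels and $q$ edge labels pairwise distinct and $N(\varphi) \cup E(\varphi) \subseteq \{1,2,\dots,p+q+q_0\}$; such a $\varphi$ is a semitotal labeling, and $\mathrm{opt}(G) := p+q+q_0$. *)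

(* Defs.v *)
From mathcomp Require Import all_boot.
Set Implicit Arguments. Unset Strict Implicit. Unset Printing Implicit Defensive.

(* A finite simple graph on vertex type T is given by an adjacency relation
   e : rel T, assumed symmetric and irreflexive (hypotheses of the theorem). *)

Section Labelings.
Variables (T : finType) (e : rel T).

Definition edges : {set {set T}} :=
  [set E | [exists x, exists y, e x y && (E == [set x; y])]].

Definition nnodes : nat := #|T|.
Definition nedges : nat := #|edges|.

Definition deg (u : T) : nat := #|[set v | e u v]|.

Definition gconnected : Prop := forall x y : T, connect e x y.

Definition ndist (a b : nat) : nat := maxn a b - minn a b.

Definition in_N (phi : T -> nat) (k : nat) : Prop := exists x, phi x = k.
Definition in_E (phi : T -> nat) (k : nat) : Prop :=
  exists x y, e x y /\ ndist (phi x) (phi y) = k.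
Definition in_NE (phi : T -> nat) (k : nat) : Prop := in_N phi k \/ in_E phi k.

Definition distinct_labeling (phi : T -> nat) : Prop :=
  [/\ forall x, 0 < phi x,
      injective phi,
      (forall x y x' y', e x y -> e x' y' ->
         ndist (phi x) (phi y) = ndist (phi x') (phi y') ->
         [set x; y] = [set x'; y'])
    & forall z x y, e x y -> phi z <> ndist (phi x) (phi y)].

Definition total_labeling (phi : T -> nat) : Prop :=
  distinct_labeling phi /\
  forall k, in_NE phi k <-> (1 <= k <= nnodes + nedges).

Definition supergraceful : Prop := exists phi, total_labeling phi.

Definition bounded_labeling (M : nat) (phi : T -> nat) : Prop :=
  distinct_labeling phi /\ forall k, in_NE phi k -> 1 <= k <= M.

Definition is_opt (M : nat) : Prop :=
  exists q0, [/\ 0 < q0, M = nnodes + nedges + q0,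
     (exists phi, bounded_labeling M phi)
   & forall q', 0 < q' < q0 ->
       ~ exists phi, bounded_labeling (nnodes + nedges + q') phi].

Definition semitotal (M : nat) (phi : T -> nat) : Prop :=
  is_opt M /\ bounded_labeling M phi.

End Labelings.

(* Main.v *)
Require Import Defs.
From mathcomp Require Import all_boot zify.

Theorem theorem8p2 (T : finType) (e : rel T)
  (e_sym : symmetric e) (e_irr : irreflexive e) (e_conn : gconnected e)
  (nsg : ~ supergraceful e)
  (u : T) (deg_u : deg e u = nnodes T - 1)
  (M : nat) (optM : is_opt e M)
  (phi : T -> nat) (semi_phi : semitotal e M phi)
  (phi_u : phi u = M) (Mm1 : in_NE e phi (M - 1)) :
  exists mu : T -> nat, semitotal e M mu /\ in_N mu 1.
Proof.
have semi0 := semi_phi.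
case: semi_phi => _ [[pos inj edist nodist] bnd].
have hb : forall x, 1 <= phi x <= M by move=> x; apply: bnd; left; exists x.
have Mpos : 0 < M by rewrite -phi_u.
have hlt : forall x, x != u -> phi x < M.
  move=> x xu; have /andP[_ h] := hb x; rewrite ltn_neqAle h andbT.
  apply/eqP => h'; move/eqP: xu; apply; apply: inj; by rewrite h' phi_u.
have hadj : forall z, z != u -> e u z.
  have sub : [set v | e u v] \subset [set~ u].
    apply/subsetP => v; rewrite !inE => euv; apply/eqP => vu.
    by rewrite vu e_irr in euv.
  have Heq : [set v | e u v] = [set~ u].
    apply/eqP; rewrite eqEcard sub /= cardsC1.
    by move: deg_u; rewrite /deg /nnodes => ->; rewrite subn1.
  move=> z zu; have : z \in [set~ u] by rewrite !inE.
  by rewrite -Heq inE.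
case: Mm1 => [[x hx] | [x [y [exy hxy]]]]; last first.
  exists phi; split => //.
  have := hb x; have := hb y; move: hxy; rewrite /ndist => hxy h1 h2.
  have : phi x = 1 \/ phi y = 1 by lia.
  by case=> h; [exists x | exists y].
have xu : x != u.
  by apply/eqP => xu; rewrite xu phi_u in hx; lia.
pose mu := fun z => if z == u then M else M - phi z.
have muu : mu u = phi u by rewrite /mu eqxx.
have muw : forall w, w != u -> mu w = ndist (phi u) (phi w).
  move=> w wu; rewrite /mu (negbTE wu) phi_u /ndist; have := hb w; lia.
have classify : forall a b, e a b ->
   (a != u /\ b != u /\ ndist (mu a) (mu b) = ndist (phi a) (phi b)) \/
   exists w, [/\ w != u, [set a; b] = [set u; w] & ndist (mu a) (mu b) = phi w].
  move=> a b eab.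
  case: (eqVneq a u) => [au|au]; case: (eqVneq b u) => [bu|bu].
  - by rewrite au bu e_irr in eab.
  - right; exists b; split => //; first by rewrite au.
    rewrite au muu (muw b bu) phi_u /ndist; have := hb b; lia.
  - right; exists a; split => //; first by rewrite bu setUC.
    rewrite bu muu (muw a au) phi_u /ndist; have := hb a; lia.
  - left; split => //; split => //.
    rewrite /mu (negbTE au) (negbTE bu) /ndist; have := hb a; have := hb b; lia.
exists mu; split; last first.
  by exists x; rewrite /mu (negbTE xu) hx; lia.
split; first by case: semi0.
split; first split.
- move=> z; rewrite /mu; case: eqP => // /eqP zu; have := hlt z zu; lia.
- move=> a b; rewrite /mu.
  case: (eqVneq a u) => [au|au]; case: (eqVneq b u) => [bu|bu].
  + by rewrite au bu.
  + move=> h; have := pos b; have := hlt b bu; lia.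
  + move=> h; have := pos a; have := hlt a au; lia.
  + move=> h; apply: inj; have := hb a; have := hb b; lia.
- move=> a b a' b' eab eab' h.
  case: (classify a b eab) => [[au [bu h1]] | [w [wu s1 h1]]];
  case: (classify a' b' eab') => [[au' [bu' h2]] | [w' [wu' s2 h2]]].
  + by apply: edist => //; rewrite -h1 -h2.
  + by exfalso; apply: (nodist w' a b eab); rewrite -h1 -h2 h.
  + by exfalso; apply: (nodist w a' b' eab'); rewrite -h1 -h2 h.
  + rewrite s1 s2; congr [set u; _]; apply: inj; by rewrite -h1 -h2.
- move=> z a b eab.
  case: (eqVneq z u) => [->|zu].
  + rewrite muu.
    case: (classify a b eab) => [[au [bu h1]] | [w [wu s1 h1]]].
    * by rewrite h1; apply: nodist.
    * rewrite h1 => h; move/eqP: wu; apply; by apply: inj.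
  + rewrite (muw z zu).
    case: (classify a b eab) => [[au [bu h1]] | [w [wu s1 h1]]].
    * rewrite h1 => h.
      have Hs := edist u z a b (hadj z zu) eab h.
      have : u \in [set a; b] by rewrite -Hs !inE eqxx.
      rewrite !inE => /orP[/eqP ua|/eqP ub].
      - by move/eqP: au; apply.
      - by move/eqP: bu; apply.
    * rewrite h1 => h; apply: (nodist w u z (hadj z zu)); by rewrite h.
move=> k [[z <-] | [a [b [eab <-]]]].
  case: (eqVneq z u) => [->|zu].
    by rewrite muu; apply: bnd; left; exists u.
  by rewrite (muw z zu); apply: bnd; right; exists u, z; split => //; apply: hadj.
case: (classify a b eab) => [[au [bu h1]] | [w [wu s1 h1]]]; rewrite h1.
  by apply: bnd; right; exists a, b.
by apply: bnd; left; exists w.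
Qed.
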